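(* Let $f:\mathbb{N}^k\to\mathbb{N}$ be a function in the class $\mathcal{G}$. Then for all but finitely many positive integers $s$ there exists a $\lambda$-term $E$ such that (1) for all $n_1,\dots,n_k\in\mathbb{N}$, $E\,\rho(n_1)\cdots\rho(n_k)=_{\beta\eta}\rho(f(n_1,\dots,n_k))$, and (2) $\vdash E:\omega_{\tau(s)}\to\cdots\to\omega_{\tau(s)}\to\omega_{\tau(s)}$ (with $k$ arguments), where $\tau(s)=(\alpha^{s}\to\alpha)\to\alpha$ with $\alpha=\omega_o$, i.e. $\tau(s)$ is the type of an $s$-tuple of numerals.
   Context: We work in the simply typed $\lambda$-calculus (type assignment to untyped $\lambda$-terms) with a single base type $o$. For a type $\tau$, $\omega_\tau=(\tau\to\tau)\to\tau\to\tau$, and $\beta_1^{s}\to\gamma$ abbreviates $\beta_1\to\cdots\to\beta_1\to\gamma$ with $s$ copies of $\beta_1$. The Church numeral of $n$ is $\rho(n)=\lambda f x.f^{n}x$ (so $\rho(0)=\lambda fx.x$, $\rho(1)=\lambda fx.fx$, etc.); it can be assigned type $\omega_\tau$ for every $\tau$. Equality $=_{\beta\eta}$ is $\beta\eta$-conversion. Extended polynomials: the smallest class of functions over $\mathbb{N}$ containing the constants $0$ and $1$, projections, addition, multiplication and $\mathrm{ifzero}(n,m,p)=(\text{if } n=0 \text{ then } m \text{ else } p)$, closed under composition. $\mathcal{G}$ is the smallest class of functions over $\mathbb{N}$ that is closed under composition and contains: all extended polynomials; for every $l\geq 2$ the function $f_1^{l}(m,n_1,\dots,n_l)=n_i$ where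 $i=(m\bmod l)+1$; and for every $l\geq 1$ the function $f_2^{l}(m,n_1,n_2)=(\text{if } m\leq l \text{ then } n_1 \text{ else } n_2)$. *)

(* Defs.v *)
From Stdlib Require Import Arith List Relations.
Import ListNotations.

Inductive term : Type :=
| Var : nat -> term
| App : term -> term -> term
| Lam : term -> term.

Fixpoint lift (c d : nat) (t : term) : term :=
  match t with
  | Var k => if k <? c then Var k else Var (k + d)
  | App a b => App (lift c d a) (lift c d b)
  | Lam a => Lam (lift (S c) d a)
  end.

Fixpoint subst (t : term) (n : nat) (u : term) : term :=
  match t with
  | Var k => if k <? n then Var k
             else if k =? n then lift 0 n u
             else Var (k - 1)
  | App a b => App (subst a n u) (subst b n u)
  | Lam a => Lam (subst a (S n) u)
  end.

Inductive step : term -> term -> Prop :=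
| step_beta a b : step (App (Lam a) b) (subst a 0 b)
| step_eta t : step (Lam (App (lift 0 1 t) (Var 0))) t
| step_appl a a' b : step a a' -> step (App a b) (App a' b)
| step_appr a b b' : step b b' -> step (App a b) (App a b')
| step_lam a a' : step a a' -> step (Lam a) (Lam a').

Definition beta_eta_conv : term -> term -> Prop := clos_refl_sym_trans term step.

Definition apps (E : term) (args : list term) : term := fold_left App args E.

Definition rho (n : nat) : term := Lam (Lam (Nat.iter n (App (Var 1)) (Var 0))).

Inductive ty : Type :=
| TO : ty
| Arr : ty -> ty -> ty.

Fixpoint arrows (bs : list ty) (g : ty) : ty :=
  match bs with
  | [] => g
  | b :: bs' => Arr b (arrows bs' g)
  end.

Definition omega (t : ty) : ty := Arr (Arr t t) (Arr t t).

Definition alpha : ty := omega TO.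
Definition tau (s : nat) : ty := Arr (arrows (repeat alpha s) alpha) alpha.

Inductive has_type : list ty -> term -> ty -> Prop :=
| ht_var G n A : nth_error G n = Some A -> has_type G (Var n) A
| ht_app G a b A B : has_type G a (Arr A B) -> has_type G b A -> has_type G (App a b) B
| ht_lam G a A B : has_type (A :: G) a B -> has_type G (Lam a) (Arr A B).

(** * The class G of functions N^k -> N.
    A k-ary function is represented as [list nat -> nat]; only its values
    on lists of length k matter (closure under extensional equality on N^k). *)
Inductive inG : nat -> (list nat -> nat) -> Prop :=
| G_zero k : inG k (fun _ => 0)
| G_one k : inG k (fun _ => 1)
| G_proj k i : i < k -> inG k (fun xs => nth i xs 0)
| G_add : inG 2 (fun xs => nth 0 xs 0 + nth 1 xs 0)
| G_mul : inG 2 (fun xs => nth 0 xs 0 * nth 1 xs 0)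
| G_ifzero : inG 3 (fun xs => if nth 0 xs 0 =? 0 then nth 1 xs 0 else nth 2 xs 0)
| G_f1 l : 2 <= l -> inG (S l) (fun xs => nth (S (nth 0 xs 0 mod l)) xs 0)
| G_f2 l : 1 <= l -> inG 3 (fun xs => if nth 0 xs 0 <=? l then nth 1 xs 0 else nth 2 xs 0)
| G_comp k m h gs : inG m h -> length gs = m -> (forall g, In g gs -> inG k g) ->
    inG k (fun xs => h (map (fun g => g xs) gs))
| G_ext k f g : inG k f -> (forall xs, length xs = k -> f xs = g xs) -> inG k g.

(* Main.v *)
Require Import Defs.
From Stdlib Require Import Arith List Relations Lia.
Import ListNotations.


Arguments rho : simpl never.
Notation conv := beta_eta_conv.

Lemma conv_refl t : conv t t. Proof. apply rst_refl. Qed.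
Lemma conv_step a b : step a b -> conv a b. Proof. apply rst_step. Qed.
Lemma conv_sym a b : conv a b -> conv b a. Proof. apply rst_sym. Qed.
Lemma conv_trans a b c : conv a b -> conv b c -> conv a c. Proof. apply rst_trans. Qed.

Lemma conv_appl a a' b : conv a a' -> conv (App a b) (App a' b).
Proof. induction 1; [apply conv_step; now constructor | apply conv_refl | now apply conv_sym | eapply conv_trans; eauto]. Qed.
Lemma conv_appr a b b' : conv b b' -> conv (App a b) (App a b').
Proof. induction 1; [apply conv_step; now constructor | apply conv_refl | now apply conv_sym | eapply conv_trans; eauto]. Qed.
Lemma conv_lam a a' : conv a a' -> conv (Lam a) (Lam a').
Proof. induction 1; [apply conv_step; now constructor | apply conv_refl | now apply conv_sym | eapply conv_trans; eauto]. Qed.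
Lemma conv_app a a' b b' : conv a a' -> conv b b' -> conv (App a b) (App a' b').
Proof. intros; eapply conv_trans; [apply conv_appl|apply conv_appr]; eauto. Qed.

Lemma conv_apps_head a a' l : conv a a' -> conv (apps a l) (apps a' l).
Proof. revert a a'; induction l; simpl; intros; auto. apply IHl. now apply conv_appl. Qed.
Lemma conv_apps_args a l l' : Forall2 conv l l' -> conv (apps a l) (apps a l').
Proof. intros H; revert a; induction H; simpl; intros. apply conv_refl.
  eapply conv_trans; [apply conv_apps_head, conv_appr, H| apply IHForall2]. Qed.

Lemma apps_cons a x l : apps a (x :: l) = apps (App a x) l. Proof. reflexivity. Qed.

Fixpoint lams (n : nat) (t : term) : term :=
  match n with 0 => t | S n' => Lam (lams n' t) end.

Fixpoint closed_at (d : nat) (t : term) : Prop :=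
  match t with
  | Var i => i < d
  | App a b => closed_at d a /\ closed_at d b
  | Lam a => closed_at (S d) a
  end.

Fixpoint inst (t : term) (d : nat) (s : list term) : term :=
  match t with
  | Var i => if i <? d then Var i
             else if i - d <? length s then nth (i - d) s (Var 0)
             else Var (i - length s)
  | App a b => App (inst a d s) (inst b d s)
  | Lam a => Lam (inst a (S d) s)
  end.

Lemma lift_0 t c : lift c 0 t = t.
Proof. revert c; induction t; simpl; intros; f_equal; auto.
  destruct (n <? c); f_equal; lia. Qed.

Lemma subst_lift t c u : subst (lift c 1 t) c u = t.
Proof. revert c; induction t; simpl; intros; try (f_equal; auto).
  destruct (Nat.ltb_spec n c); simpl.
  - destruct (Nat.ltb_spec n c); [auto|lia].
  - destruct (Nat.ltb_spec (n+1) c); [lia|]. destruct (Nat.eqb_spec (n+1) c); [lia|]. f_equal; lia. Qed.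

Lemma closed_mono t d d' : closed_at d t -> d <= d' -> closed_at d' t.
Proof. revert d d'; induction t; simpl; intros; try lia.
  destruct H; split; eauto. eapply IHt; eauto; lia. Qed.

Lemma closed_lift t d c k : closed_at d t -> d <= c -> lift c k t = t.
Proof. revert d c; induction t; simpl; intros.
  - destruct (Nat.ltb_spec n c); auto; lia.
  - destruct H; f_equal; eauto.
  - f_equal; eapply IHt; eauto; lia. Qed.

Lemma closed_subst t d n u : closed_at d t -> d <= n -> subst t n u = t.
Proof. revert d n; induction t; simpl; intros.
  - destruct (Nat.ltb_spec n n0); auto; lia.
  - destruct H; f_equal; eauto.
  - f_equal; eapply IHt; eauto; lia. Qed.

Lemma closed_inst t d d' s : closed_at d t -> d <= d' -> inst t d' s = t.
Proof. revert d d'; induction t; simpl; intros.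
  - destruct (Nat.ltb_spec n d'); auto; lia.
  - destruct H; f_equal; eauto.
  - f_equal; eapply IHt; eauto; lia. Qed.

Lemma closed_inst0 t d s : closed_at 0 t -> inst t d s = t.
Proof. intros; eapply closed_inst; eauto; lia. Qed.

Lemma inst_nil t d : inst t d [] = t.
Proof. revert d; induction t; simpl; intros; f_equal; auto.
  destruct (n <? d); auto. simpl. f_equal; lia. Qed.

Lemma inst_subst t c s d : closed_at 0 c ->
  inst (subst t (d + length s) c) d s = inst t d (s ++ [c]).
Proof. revert d; induction t; simpl; intros.
  - rewrite length_app; simpl.
    destruct (Nat.ltb_spec n (d + length s)).
    + simpl. destruct (Nat.ltb_spec n d); auto.
      destruct (Nat.ltb_spec (n - d) (length s)); [|lia].
      destruct (Nat.ltb_spec (n - d) (length s + 1)); [|lia].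
      rewrite app_nth1; auto.
    + destruct (Nat.eqb_spec n (d + length s)).
      * rewrite (closed_lift _ 0); auto; try lia. rewrite closed_inst0; auto.
        destruct (Nat.ltb_spec n d); [lia|].
        destruct (Nat.ltb_spec (n - d) (length s + 1)); [|lia].
        rewrite app_nth2 by lia. replace (n - d - length s) with 0 by lia. reflexivity.
      * simpl. destruct (Nat.ltb_spec (n-1) d); [lia|]. destruct (Nat.ltb_spec n d); [lia|].
        destruct (Nat.ltb_spec (n - 1 - d) (length s)); [lia|].
        destruct (Nat.ltb_spec (n - d) (length s + 1)); [lia|]. f_equal; lia.
  - f_equal; auto.
  - f_equal. apply (IHt (S d)); auto. Qed.

Lemma subst_lams n t k u : subst (lams n t) k u = lams n (subst t (n + k) u).
Proof. revert k; induction n; simpl; intros; auto. f_equal. rewrite IHn. f_equal. f_equal. lia. Qed.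

Lemma multi_beta cs body : Forall (closed_at 0) cs ->
  conv (apps (lams (length cs) body) cs) (inst body 0 (rev cs)).
Proof. intros H; revert body; induction H; intros; simpl.
  - rewrite inst_nil; apply conv_refl.
  - eapply conv_trans. apply conv_apps_head. apply conv_step. apply step_beta.
    rewrite subst_lams. eapply conv_trans. apply IHForall.
    rewrite <- (length_rev l). rewrite <- (inst_subst _ _ _ 0); auto. rewrite Nat.add_0_l.
    replace (length (rev l) + 0) with (length (rev l)) by lia. apply conv_refl. Qed.

Lemma multi_beta' n cs body : Forall (closed_at 0) cs -> length cs = n ->
  conv (apps (lams n body) cs) (inst body 0 (rev cs)).
Proof. intros H <-; now apply multi_beta. Qed.

Lemma beta_closed b c : closed_at 0 c -> conv (App (Lam b) c) (inst b 0 [c]).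
Proof. intros. apply (multi_beta' 1 [c]); auto. Qed.

Lemma inst_apps h l d s : inst (apps h l) d s = apps (inst h d s) (map (fun t => inst t d s) l).
Proof. revert h; induction l; simpl; intros; auto. Qed.
Lemma subst_apps h l n u : subst (apps h l) n u = apps (subst h n u) (map (fun t => subst t n u) l).
Proof. revert h; induction l; simpl; intros; auto. Qed.
Lemma closed_apps h l d : closed_at d h -> Forall (closed_at d) l -> closed_at d (apps h l).
Proof. intros H1 H2; revert h H1; induction H2; simpl; intros; auto. apply IHForall; simpl; auto. Qed.
Lemma closed_lams n t d : closed_at (n + d) t -> closed_at d (lams n t).
Proof. revert d; induction n; simpl; intros; auto. apply IHn. now rewrite Nat.add_succ_r. Qed.

Lemma iter_closed n d F X : closed_at d F -> closed_at d X -> closed_at d (Nat.iter n (App F) X).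
Proof. induction n; simpl; auto. Qed.
Lemma rho_closed n : closed_at 0 (rho n).
Proof. unfold rho; simpl. apply iter_closed; simpl; lia. Qed.

Lemma subst_iter n F X k u : subst (Nat.iter n (App F) X) k u = Nat.iter n (App (subst F k u)) (subst X k u).
Proof. induction n; simpl; auto. now rewrite IHn. Qed.
Lemma lift_iter n F X c k : lift c k (Nat.iter n (App F) X) = Nat.iter n (App (lift c k F)) (lift c k X).
Proof. induction n; simpl; auto. now rewrite IHn. Qed.

Lemma rho_app n F X : conv (App (App (rho n) F) X) (Nat.iter n (App F) X).
Proof.
  eapply conv_trans. apply conv_appl, conv_step, step_beta.
  unfold rho; simpl. rewrite subst_iter. simpl.
  eapply conv_trans. apply conv_step, step_beta.
  rewrite subst_iter, subst_lift. simpl. rewrite lift_0. apply conv_refl. Qed.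

Lemma iter_conv n F X X' : conv X X' -> conv (Nat.iter n (App F) X) (Nat.iter n (App F) X').
Proof. induction n; simpl; auto. intros; apply conv_appr; auto. Qed.

Lemma weaken G t A : has_type G t A -> forall D, has_type (G ++ D) t A.
Proof. induction 1; intros.
  - constructor. rewrite nth_error_app1; auto. apply nth_error_Some. congruence.
  - econstructor; eauto.
  - constructor. apply (IHhas_type D). Qed.
Lemma weaken0 t A G : has_type [] t A -> has_type G t A.
Proof. intros H; apply (weaken _ _ _ H G). Qed.

Lemma typed_closed G t A : has_type G t A -> closed_at (length G) t.
Proof. induction 1; simpl; auto. apply nth_error_Some; congruence. Qed.

Lemma lams_typed n A G t B : has_type (repeat A n ++ G) t B -> has_type G (lams n t) (arrows (repeat A n) B).
Proof. revert G; induction n; simpl; intros; auto. constructor. apply IHn.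
  replace (repeat A n ++ A :: G) with ((repeat A n ++ [A]) ++ G) by (now rewrite <- app_assoc).
  rewrite <- repeat_cons. exact H. Qed.

Lemma apps_typed G h args As B : has_type G h (arrows As B) -> Forall2 (has_type G) args As -> has_type G (apps h args) B.
Proof. intros H1 H2; revert h H1; induction H2; simpl; intros; auto. apply IHForall2. econstructor; eauto. Qed.

Lemma Forall2_repeat {X Y} (P : X -> Y -> Prop) l A : (forall x, In x l -> P x A) -> Forall2 P l (repeat A (length l)).
Proof. induction l; simpl; intros; constructor; auto. Qed.

Lemma rho_typed G n A : has_type G (rho n) (omega A).
Proof. unfold rho, omega. constructor; constructor. induction n; simpl.
  - now constructor. - econstructor; eauto. now constructor. Qed.
Arguments rho : simpl never.

Definition W s := omega (tau s).
Definition RepE s k (f : list nat -> nat) E :=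
  (forall ns, length ns = k -> conv (apps E (map rho ns)) (rho (f ns))) /\
  has_type [] E (arrows (repeat (W s) k) (W s)).
Definition Rep s k f := exists E, RepE s k f E.

Lemma rep_ext s k f g : Rep s k f -> (forall xs, length xs = k -> f xs = g xs) -> Rep s k g.
Proof. intros [E [H1 H2]] He; exists E; split; auto. intros; rewrite <- He; auto. Qed.

Lemma map_rho_closed ns : Forall (closed_at 0) (map rho ns).
Proof. apply Forall_map, Forall_forall; intros; apply rho_closed. Qed.

Lemma rep_const s k c : Rep s k (fun _ => c).
Proof. exists (lams k (rho c)); split.
  - intros ns Hl. eapply conv_trans. apply multi_beta'. apply map_rho_closed. now rewrite length_map.
    rewrite closed_inst0 by apply rho_closed. apply conv_refl.
  - apply lams_typed. apply rho_typed. Qed.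

Definition vars k := map (fun i => Var (k - 1 - i)) (seq 0 k).

Lemma inst_vars (l : list term) : map (fun t => inst t 0 (rev l)) (vars (length l)) = l.
Proof. unfold vars. rewrite map_map. apply nth_ext with (Var 0) (Var 0).
  - now rewrite length_map, length_seq.
  - intros n Hn. rewrite length_map, length_seq in Hn.
    rewrite nth_indep with (d' := (fun x => inst (Var (length l - 1 - x)) 0 (rev l)) 0) by (now rewrite length_map, length_seq).
    rewrite (map_nth (fun x => inst (Var (length l - 1 - x)) 0 (rev l))), seq_nth by auto. simpl.
    rewrite length_rev. destruct (Nat.ltb_spec (length l - 1 - n - 0) (length l)); [|lia].
    rewrite rev_nth by lia. f_equal. lia. Qed.

Lemma vars_typed k A G : Forall2 (has_type (repeat A k ++ G)) (vars k) (repeat A k).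
Proof. replace (repeat A k) with (repeat A (length (vars k))) at 2 by (unfold vars; now rewrite length_map, length_seq).
  apply Forall2_repeat. unfold vars; intros x Hx. apply in_map_iff in Hx as [i [<- Hi]].
  apply in_seq in Hi. constructor. rewrite nth_error_app1 by (rewrite repeat_length; lia).
  apply nth_error_repeat; lia. Qed.

Lemma rep_proj s k i : i < k -> Rep s k (fun xs => nth i xs 0).
Proof. intros Hi. exists (lams k (Var (k - 1 - i))); split.
  - intros ns Hl. eapply conv_trans. apply multi_beta'. apply map_rho_closed. now rewrite length_map.
    simpl. rewrite length_rev, length_map. destruct (Nat.ltb_spec (k-1-i-0) (length ns)); [|lia].
    rewrite rev_nth by (rewrite length_map; lia). rewrite length_map.
    replace (length ns - S (k - 1 - i - 0)) with i by lia.
    rewrite nth_indep with (d' := rho 0) by (rewrite length_map; lia). rewrite map_nth. apply conv_refl.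
  - apply lams_typed. constructor. rewrite nth_error_app1 by (rewrite repeat_length; lia).
    apply nth_error_repeat; lia. Qed.

Lemma choice_list {X Y} (P : X -> Y -> Prop) l : (forall x, In x l -> exists y, P x y) -> exists l', Forall2 P l l'.
Proof. induction l; intros H. exists []; constructor.
  destruct (H a) as [y Hy]; simpl; auto. destruct IHl as [l' Hl']; [intros; apply H; simpl; auto|].
  exists (y :: l'); constructor; auto. Qed.

Lemma F2_in_r {X Y} (P : X -> Y -> Prop) l l' : Forall2 P l l' -> forall y, In y l' -> exists x, In x l /\ P x y.
Proof. induction 1; simpl; intros. contradiction. destruct H1 as [<-|H1]; eauto.
  destruct (IHForall2 _ H1) as [x0 [? ?]]; eauto. Qed.

Lemma rep_comp s k m h gs : Rep s m h -> length gs = m -> (forall g, In g gs -> Rep s k g) ->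
  Rep s k (fun xs => h (map (fun g => g xs) gs)).
Proof.
  intros [H [Hc Ht]] Hlen Hg. destruct (choice_list (RepE s k) gs Hg) as [Gs HGs].
  exists (lams k (apps H (map (fun G => apps G (vars k)) Gs))); split.
  - intros ns Hl. eapply conv_trans. apply multi_beta'. apply map_rho_closed. now rewrite length_map.
    rewrite inst_apps. rewrite (closed_inst _ 0) by (apply (typed_closed _ _ _ Ht) || lia).
    rewrite map_map.
    eapply conv_trans; [apply conv_apps_args| apply Hc].
    2: { rewrite length_map; now rewrite Hlen. }
    rewrite map_map. clear Hlen Hc Ht Hg.
    induction HGs; simpl; constructor; auto.
    destruct H0 as [H0c H0t]. rewrite inst_apps. rewrite (closed_inst _ 0) by (apply (typed_closed _ _ _ H0t) || lia).
    replace k with (length (map rho ns)) by (now rewrite length_map).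
    rewrite inst_vars. now apply H0c.
  - apply lams_typed. apply apps_typed with (repeat (W s) m).
    + rewrite app_nil_r; apply weaken0; auto.
    + rewrite <- Hlen. rewrite (Forall2_length HGs). rewrite <- (length_map (fun G => apps G (vars k)) Gs).
      apply Forall2_repeat. intros x Hx. apply in_map_iff in Hx as [G [<- HG]].
      destruct (F2_in_r _ _ _ HGs G HG) as [g [_ [_ HGt]]].
      apply apps_typed with (repeat (W s) k). apply weaken0; auto. apply vars_typed. Qed.
Arguments rho : simpl never.

Ltac ty := repeat first [ apply ht_lam | eapply ht_app | (apply ht_var; reflexivity) | apply rho_typed ].

Lemma rho_def n : rho n = Lam (Lam (Nat.iter n (App (Var 1)) (Var 0))). Proof. reflexivity. Qed.
Opaque rho.

Lemma rep_add s : Rep s 2 (fun xs => nth 0 xs 0 + nth 1 xs 0).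
Proof. exists (lams 2 (Lam (Lam (App (App (Var 3) (Var 1)) (App (App (Var 2) (Var 1)) (Var 0)))))); split.
  - intros [|a [|b [|]]] Hl; simpl in Hl; try lia.
    eapply conv_trans. apply multi_beta'. apply map_rho_closed. reflexivity.
    simpl. rewrite (rho_def (a+b)). do 2 apply conv_lam.
    eapply conv_trans. apply conv_appr, rho_app. eapply conv_trans. apply rho_app.
    rewrite Nat.iter_add. apply conv_refl.
  - simpl. unfold W, omega. ty. Qed.

Lemma iter_mul a b F X : conv (Nat.iter a (App (App (rho b) F)) X) (Nat.iter (a*b) (App F) X).
Proof. induction a; simpl. apply conv_refl.
  eapply conv_trans. apply conv_appr, IHa. eapply conv_trans. apply rho_app.
  rewrite Nat.iter_add. apply conv_refl. Qed.

Lemma rep_mul s : Rep s 2 (fun xs => nth 0 xs 0 * nth 1 xs 0).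
Proof. exists (lams 2 (Lam (Lam (App (App (Var 3) (App (Var 2) (Var 1))) (Var 0))))); split.
  - intros [|a [|b [|]]] Hl; simpl in Hl; try lia.
    eapply conv_trans. apply multi_beta'. apply map_rho_closed. reflexivity.
    simpl. rewrite (rho_def (a*b)). do 2 apply conv_lam.
    eapply conv_trans. apply rho_app. apply iter_mul.
  - simpl. unfold W, omega. ty. Qed.

Lemma rep_ifzero s : Rep s 3 (fun xs => if nth 0 xs 0 =? 0 then nth 1 xs 0 else nth 2 xs 0).
Proof. exists (lams 3 (Lam (Lam (App (App (Var 4) (Lam (App (App (Var 3) (Var 2)) (Var 1)))) (App (App (Var 3) (Var 1)) (Var 0)))))); split.
  - intros [|a [|b [|c [|]]]] Hl; simpl in Hl; try lia.
    eapply conv_trans. apply multi_beta'. apply map_rho_closed. reflexivity.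
    simpl. rewrite (rho_def (if a =? 0 then b else c)). do 2 apply conv_lam.
    eapply conv_trans. apply rho_app.
    destruct a; simpl. apply rho_app.
    eapply conv_trans. apply conv_step, step_beta. simpl.
    rewrite (closed_subst (rho c) 0) by (apply rho_closed || lia). apply rho_app.
  - simpl. unfold W, omega. ty. Qed.
Opaque rho.

Definition TUPf s (w : nat -> nat) := Lam (apps (Var 0) (map (fun i => rho (w i)) (seq 0 s))).
Definition STEPK s (p : nat -> nat) := lams s (apps (Var s) (map (fun i => Var (s - 1 - p i)) (seq 0 s))).
Definition STEP s p := Lam (Lam (App (Var 1) (STEPK s p))).
Definition SEL s j := lams s (Var (s - 1 - j)).

Lemma rhos_closed d s w : Forall (closed_at d) (map (fun i => rho (w i)) (seq 0 s)).
Proof. apply Forall_map, Forall_forall; intros. eapply closed_mono; [apply rho_closed|lia]. Qed.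

Lemma TUP_closed s w : closed_at 0 (TUPf s w).
Proof. unfold TUPf; simpl. apply closed_apps; simpl; auto. apply rhos_closed. Qed.
Lemma STEPK_closed s p : closed_at 1 (STEPK s p).
Proof. unfold STEPK. apply closed_lams. apply closed_apps; simpl; [lia|].
  apply Forall_map, Forall_forall; intros; simpl; lia. Qed.
Lemma STEP_closed s p : closed_at 0 (STEP s p).
Proof. unfold STEP; simpl. split; [lia|]. eapply closed_mono; [apply STEPK_closed|lia]. Qed.
Lemma SEL_closed s j : 0 < s -> closed_at 0 (SEL s j).
Proof. intros; unfold SEL. apply closed_lams. simpl; lia. Qed.

Lemma Forall2_repeat' {X Y} (P : X -> Y -> Prop) l A n : length l = n -> (forall x, In x l -> P x A) -> Forall2 P l (repeat A n).
Proof. intros <-; apply Forall2_repeat. Qed.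

Definition H s := arrows (repeat alpha s) alpha.

Lemma TUP_typed G s w : has_type G (TUPf s w) (tau s).
Proof. unfold TUPf, tau. constructor. apply apps_typed with (repeat alpha s).
  constructor; reflexivity.
  apply Forall2_repeat'. now rewrite length_map, length_seq. intros x Hx. apply in_map_iff in Hx as [i [<- _]]. apply rho_typed. Qed.

Lemma STEP_typed G s p : has_type G (STEP s p) (Arr (tau s) (tau s)).
Proof. apply weaken0. unfold STEP, tau. constructor. constructor. econstructor. constructor; reflexivity.
  unfold STEPK. apply lams_typed. apply apps_typed with (repeat alpha s).
  constructor. rewrite nth_error_app2; rewrite repeat_length; [|lia]. now rewrite Nat.sub_diag.
  apply Forall2_repeat'. now rewrite length_map, length_seq. intros x Hx. apply in_map_iff in Hx as [i [<- Hi]]. apply in_seq in Hi.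
  constructor. rewrite nth_error_app1 by (rewrite repeat_length; lia). apply nth_error_repeat; lia. Qed.

Lemma SEL_typed G s j : 0 < s -> has_type G (SEL s j) (arrows (repeat alpha s) alpha).
Proof. intros; apply weaken0. unfold SEL. apply lams_typed. constructor. rewrite app_nil_r.
  apply nth_error_repeat; lia. Qed.

Lemma nth_rev_rhos s w k : k < s -> nth (s - 1 - k) (rev (map (fun i => rho (w i)) (seq 0 s))) (Var 0) = rho (w k).
Proof. intros. rewrite rev_nth; rewrite length_map, length_seq; [|lia].
  replace (s - S (s - 1 - k)) with k by lia.
  rewrite nth_indep with (d' := rho (w 0)) by (rewrite length_map, length_seq; lia).
  rewrite (map_nth (fun i => rho (w i))). rewrite seq_nth by lia. reflexivity. Qed.

Opaque STEPK.

Lemma step_conv s p w : (forall i, i < s -> p i < s) ->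
  conv (App (STEP s p) (TUPf s w)) (TUPf s (fun i => w (p i))).
Proof. intros Hp. unfold STEP.
  eapply conv_trans. apply beta_closed, TUP_closed. simpl.
  rewrite (closed_inst (STEPK s p) 1) by (apply STEPK_closed || lia).
  unfold TUPf at 2. apply conv_lam.
  eapply conv_trans. apply conv_step, step_beta. rewrite subst_apps. simpl. rewrite lift_0.
  rewrite map_map. rewrite map_ext with (g := fun i => rho (w i))
    by (intros; eapply closed_subst; [apply rho_closed|lia]).
  Transparent STEPK. unfold STEPK.
  eapply conv_trans. apply multi_beta'. apply rhos_closed. now rewrite length_map, length_seq.
  rewrite inst_apps. simpl. rewrite length_rev, length_map, length_seq.
  destruct (Nat.ltb_spec (s - 0) s); [lia|]. rewrite Nat.sub_diag.
  rewrite map_map. rewrite map_ext_in with (g := fun i => rho (w (p i))). apply conv_refl.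
  intros i Hi. apply in_seq in Hi. simpl. destruct (Nat.ltb_spec (s - 1 - p i) 0); [lia|].
  rewrite length_rev, length_map, length_seq. rewrite Nat.sub_0_r.
  destruct (Nat.ltb_spec (s - 1 - p i) s); [|specialize (Hp i); lia].
  apply nth_rev_rhos. apply Hp; lia. Qed.

Opaque STEPK.

Lemma iter_step s p w m : (forall i, i < s -> p i < s) ->
  conv (Nat.iter m (App (STEP s p)) (TUPf s w)) (TUPf s (fun i => w (Nat.iter m p i))).
Proof. intros Hp. induction m; simpl. apply conv_refl.
  eapply conv_trans. apply conv_appr, IHm. eapply conv_trans. apply step_conv; auto.
  unfold TUPf. rewrite map_ext with (g := fun i => rho (w (Nat.iter (S m) p i))). apply conv_refl.
  intros; now rewrite Nat.iter_succ_r. Qed.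

Lemma sel_conv s w j : j < s -> conv (App (TUPf s w) (SEL s j)) (rho (w j)).
Proof. intros Hj. eapply conv_trans. unfold TUPf at 1. apply beta_closed, SEL_closed; lia.
  rewrite inst_apps. simpl. rewrite map_map.
  rewrite map_ext with (g := fun i => rho (w i)) by (intros; apply closed_inst0, rho_closed).
  unfold SEL. eapply conv_trans. apply multi_beta'. apply rhos_closed. now rewrite length_map, length_seq.
  simpl. rewrite length_rev, length_map, length_seq. destruct (Nat.ltb_spec (s - 1 - j) 0); [lia|].
  rewrite Nat.sub_0_r. destruct (Nat.ltb_spec (s - 1 - j) s); [|lia]. rewrite nth_rev_rhos by lia. apply conv_refl. Qed.

Lemma read_conv s p w j m : (forall i, i < s -> p i < s) -> j < s ->
  conv (App (App (App (rho m) (STEP s p)) (TUPf s w)) (SEL s j)) (rho (w (Nat.iter m p j))).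
Proof. intros. eapply conv_trans. apply conv_appl, rho_app. eapply conv_trans. apply conv_appl, iter_step; auto.
  apply (sel_conv s (fun i => w (Nat.iter m p i))); auto. Qed.
Opaque rho.

Lemma eta_conv t : conv (Lam (App (lift 0 1 t) (Var 0))) t.
Proof. apply conv_step, step_eta. Qed.

Lemma eta0 : conv (Lam (Lam (Lam (Lam (Lam (App (App (App (Var 3) (Var 2)) (Var 1)) (Var 0))))))) (rho 0).
Proof. rewrite (rho_def 0). simpl. do 2 apply conv_lam.
  eapply conv_trans. do 2 apply conv_lam. apply (eta_conv (App (App (Var 2) (Var 1)) (Var 0))).
  eapply conv_trans. apply conv_lam. apply (eta_conv (App (Var 1) (Var 0))).
  apply (eta_conv (Var 0)). Qed.

Lemma eta1 : conv (Lam (Lam (Lam (Lam (Lam (App (App (App (App (Var 4) (Var 3)) (Var 2)) (Var 1)) (Var 0))))))) (rho 1).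
Proof. rewrite (rho_def 1). simpl. do 2 apply conv_lam.
  eapply conv_trans. do 2 apply conv_lam. apply (eta_conv (App (App (App (Var 3) (Var 2)) (Var 1)) (Var 0))).
  eapply conv_trans. apply conv_lam. apply (eta_conv (App (App (Var 2) (Var 1)) (Var 0))).
  apply (eta_conv (App (Var 1) (Var 0))). Qed.

Opaque STEP TUPf SEL.

Definition ER s p w j :=
  Lam (Lam (Lam (Lam (Lam (Lam (App (App (App (App (App (Var 5) (STEP s p)) (TUPf s w)) (SEL s j))
     (Lam (App (App (App (App (Var 5) (Var 4)) (Var 3)) (Var 2)) (Var 1))))
     (App (App (App (Var 3) (Var 2)) (Var 1)) (Var 0)))))))).

Lemma rep_read s p w j : (forall i, i < s -> p i < s) -> j < s -> (forall i, w i = 0 \/ w i = 1) ->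
  Rep s 1 (fun ys => w (Nat.iter (nth 0 ys 0) p j)).
Proof. intros Hp Hj Hw. exists (ER s p w j); split.
  - intros [|m [|]] Hl; simpl in Hl; try lia. simpl.
    eapply conv_trans. apply beta_closed, rho_closed. simpl.
    rewrite !closed_inst0 by (apply STEP_closed || apply TUP_closed || (apply SEL_closed; lia)).
    eapply conv_trans. do 5 apply conv_lam. do 2 apply conv_appl. apply read_conv; auto.
    destruct (Hw (Nat.iter m p j)) as [-> | ->].
    + eapply conv_trans. do 5 apply conv_lam. apply rho_app. apply eta0.
    + eapply conv_trans. do 5 apply conv_lam. apply rho_app. simpl.
      eapply conv_trans. do 5 apply conv_lam. apply conv_step, step_beta. simpl. apply eta1.
  - simpl. unfold ER, W, omega, tau, alpha, omega.
    repeat first [ apply ht_lam | eapply ht_app | (apply ht_var; reflexivity) | apply STEP_typed | apply TUP_typed | (apply SEL_typed; lia) ].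
Qed.

Lemma iter_min s m : Nat.iter m (fun i => Nat.min (S i) (s - 1)) 0 = Nat.min m (s - 1).
Proof. induction m. simpl. lia. change (Nat.min (S (Nat.iter m (fun i => Nat.min (S i) (s - 1)) 0)) (s - 1) = Nat.min (S m) (s - 1)). rewrite IHm. lia. Qed.

Lemma rep_f2 s l : 1 <= l -> l + 1 < s -> Rep s 3 (fun xs => if nth 0 xs 0 <=? l then nth 1 xs 0 else nth 2 xs 0).
Proof. intros Hl Hs.
  set (p := fun i => Nat.min (S i) (s - 1)).
  set (w := fun i => if i <=? l then 0 else 1).
  assert (HR : Rep s 3 (fun xs => (fun ys => w (Nat.iter (nth 0 ys 0) p 0)) (map (fun g => g xs) [fun xs => nth 0 xs 0]))).
  { refine (rep_comp s 3 1 (fun ys => w (Nat.iter (nth 0 ys 0) p 0)) [fun xs => nth 0 xs 0] _ eq_refl _); [apply rep_read|].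
    - intros; unfold p; lia. - lia. - intros; unfold w; destruct (_ <=? _); auto.
    - intros g [<-|[]]; apply rep_proj; lia. }
  eapply rep_ext.
  apply (rep_comp s 3 3 _ [(fun xs => (fun ys => w (Nat.iter (nth 0 ys 0) p 0)) (map (fun g => g xs) [fun xs => nth 0 xs 0]));
     (fun xs => nth 1 xs 0); (fun xs => nth 2 xs 0)] (rep_ifzero s) eq_refl).
  - intros g [<-|[<-|[<-|[]]]]; auto; apply rep_proj; lia.
  - intros xs _. simpl. unfold p; rewrite iter_min. unfold w.
    destruct (Nat.leb_spec (nth 0 xs 0) l); destruct (Nat.leb_spec (Nat.min (nth 0 xs 0) (s - 1)) l); simpl; auto; lia. Qed.

Lemma iter_mod l m : 2 <= l -> Nat.iter m (fun i => if S i <? l then S i else 0) 0 = m mod l.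
Proof. intros Hl. induction m. simpl. symmetry; apply Nat.mod_0_l; lia.
  simpl. rewrite IHm. replace (S m) with (m + 1) by lia. rewrite Nat.Div0.add_mod.
  rewrite (Nat.mod_small 1) by lia. pose proof (Nat.mod_upper_bound m l ltac:(lia)).
  destruct (Nat.ltb_spec (S (m mod l)) l).
  - rewrite (Nat.mod_small (m mod l + 1)); lia.
  - replace (m mod l + 1) with l by lia. symmetry; apply Nat.mod_same; lia. Qed.

Fixpoint Psum l c (xs : list nat) := match c with 0 => 0
  | S c' => Psum l c' xs + (if nth 0 xs 0 mod l =? c' then 1 else 0) * nth (S c') xs 0 end.

Lemma Psum_val l c xs : Psum l c xs = if nth 0 xs 0 mod l <? c then nth (S (nth 0 xs 0 mod l)) xs 0 else 0.
Proof. induction c; simpl. destruct (Nat.ltb_spec (nth 0 xs 0 mod l) 0); lia.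
  rewrite IHc. destruct (Nat.ltb_spec (nth 0 xs 0 mod l) c); destruct (Nat.eqb_spec (nth 0 xs 0 mod l) c);
  destruct (Nat.ltb_spec (nth 0 xs 0 mod l) (S c)); try lia; simpl.
  all: try subst c; lia. Qed.

Lemma rep_Psum s l c : 2 <= l -> l < s -> c <= l -> Rep s (S l) (Psum l c).
Proof. intros Hl Hs. induction c; intros Hc.
  - simpl. apply (rep_const s (S l) 0).
  - set (p := fun i => if S i <? l then S i else 0).
    set (w := fun i => if i =? c then 1 else 0).
    assert (HR : Rep s (S l) (fun xs => (fun ys => w (Nat.iter (nth 0 ys 0) p 0)) (map (fun g => g xs) [fun xs => nth 0 xs 0]))).
    { refine (rep_comp s (S l) 1 (fun ys => w (Nat.iter (nth 0 ys 0) p 0)) [fun xs => nth 0 xs 0] _ eq_refl _); [apply rep_read|].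
      - intros; unfold p; destruct (_ <? _) eqn:E; [apply Nat.ltb_lt in E|]; lia. - lia.
      - intros; unfold w; destruct (_ =? _); auto.
      - intros g [<-|[]]; apply rep_proj; lia. }
    assert (HM : Rep s (S l) (fun xs => (fun ys => nth 0 ys 0 * nth 1 ys 0) (map (fun g => g xs)
        [(fun xs => (fun ys => w (Nat.iter (nth 0 ys 0) p 0)) (map (fun g => g xs) [fun xs => nth 0 xs 0]));
         (fun xs => nth (S c) xs 0)]))).
    { refine (rep_comp s (S l) 2 _ [_; _] (rep_mul s) eq_refl _).
      intros g [<-|[<-|[]]]; auto. apply rep_proj; lia. }
    match type of HM with Rep _ _ ?F => eapply rep_ext; [apply (rep_comp s (S l) 2 _ [Psum l c; F] (rep_add s) eq_refl)|] end.
    + intros g [<-|[<-|[]]]. apply IHc; lia. apply HM.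
    + intros xs _. simpl. unfold p, w. rewrite iter_mod by lia. reflexivity. Qed.

Lemma rep_f1 s l : 2 <= l -> l < s -> Rep s (S l) (fun xs => nth (S (nth 0 xs 0 mod l)) xs 0).
Proof. intros. eapply rep_ext. apply (rep_Psum s l l); auto.
  intros xs _. rewrite Psum_val. pose proof (Nat.mod_upper_bound (nth 0 xs 0) l ltac:(lia)).
  destruct (Nat.ltb_spec (nth 0 xs 0 mod l) l); auto; lia. Qed.

Lemma collect k (gs : list (list nat -> nat)) :
  (forall g, In g gs -> exists N, forall s, 0 < s -> N < s -> Rep s k g) ->
  exists N, forall g, In g gs -> forall s, 0 < s -> N < s -> Rep s k g.
Proof. induction gs; intros Hg. exists 0; intros g [].
  destruct (Hg a (or_introl eq_refl)) as [N1 H1]. destruct IHgs as [N2 H2]. intros; apply Hg; simpl; auto.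
  exists (N1 + N2). intros g [<-|Hin] s Hs HN. apply H1; auto; lia. apply H2; auto; lia. Qed.

Lemma main k f : inG k f -> exists N, forall s, 0 < s -> N < s -> Rep s k f.
Proof. induction 1.
  - exists 0; intros; apply rep_const.
  - exists 0; intros; apply rep_const.
  - exists 0; intros; apply rep_proj; auto.
  - exists 0; intros; apply rep_add.
  - exists 0; intros; apply rep_mul.
  - exists 0; intros; apply rep_ifzero.
  - exists l; intros; apply rep_f1; auto.
  - exists (l + 1); intros; apply rep_f2; auto; lia.
  - destruct IHinG as [N1 HH1]. match goal with Hc : forall g, In g gs -> exists N, _ |- _ => destruct (collect k gs Hc) as [N2 HH2] end.
    exists (N1 + N2); intros s Hs HN. apply rep_comp with m; auto.
    apply HH1; auto; lia. intros; apply HH2; auto; lia.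
  - destruct IHinG as [N HN]. exists N; intros. eapply rep_ext; eauto. Qed.

Theorem theorem1 :
  forall (k : nat) (f : list nat -> nat),
    inG k f ->
    exists N : nat, forall s : nat, 0 < s -> N < s ->
      exists E : term,
        (forall ns : list nat, length ns = k ->
           beta_eta_conv (apps E (map rho ns)) (rho (f ns))) /\
        has_type [] E (arrows (repeat (omega (tau s)) k) (omega (tau s))).
Proof.
  intros k f Hf. destruct (main k f Hf) as [N HN]. exists N.
  intros s Hs HNs. destruct (HN s Hs HNs) as [E [H1 H2]]. exists E. split; auto.
Qed.
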